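(* Let $G$ be a graph with finitely many vertices. Let $v\in G^0$ be a regular vertex that is not a source and that emits exactly one edge $f_0$, where $f_0$ is not a loop of length one (i.e. $r(f_0)\neq v$). Define a graph $E$ as follows: - $E^0=G^0\setminus\{v\}$; - $E^1=(G^1\setminus(r^{-1}(v)\cup s^{-1}(v)))\cup\{[ef_0]: e\in r^{-1}(v)\}$; - range and source maps extend those of $G$, with $r_E([ef_0])=r_G(f_0)$ and $s_E([ef_0])=s_G(e)$. Then $G\sim_M E$.
   Context: A graph $G=(G^0,G^1,r,s)$ has vertex set $G^0$, edge set $G^1$, and range/source maps; multiple edges and loops are allowed. A source receives no edges, a sink emits no edges, and an infinite emitter emits infinitely many edges. A vertex is singular if it is a sink or infinite emitter, and regular otherwise. A loop of length one is an edge $e$ with $s(e)=r(e)$. Move-equivalence $\sim_M$ is the smallest equivalence relation on graphs with finitely many vertices such that $G\sim_M E$ whenever $E$ is isomorphic to a graph obtained from $G$ by one of the following moves. (S) Delete a regular source together with the edges it emits. (R) For a regular vertex $u$ emitting exactly one edge $f$, with $r(f)\neq u$, and all of whose incoming edges have the same source $v$: delete $u$, $f$ and the edges into $u$, and add for each $e\in r^{-1}(u)$ an edge $[ef]$ from $v$ to $r(f)$. (O) Out-splitting at a non-sink $v$ along a partition $\mathcal E_1,\dots,\mathcal E_n$ of $s^{-1}(v)$ with at most one infinite part. Replace $v$ by $v^1,\dots,v^n$. Each edge $e$ into $v$ becomes copies $e^1,\dots,e^n$ with $r(e^i)=v^i$ and source $s(e)$, or source $v^j$ if $s(e)=v$ and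 $e\in\mathcal E_j$. An edge from $v$ to $w\neq v$ lying in $\mathcal E_i$ gets source $v^i$. (I) In-splitting at a regular non-source $v$ along a partition $\mathcal E_1,\dots,\mathcal E_n$ of $r^{-1}(v)$. Replace $v$ by $v^1,\dots,v^n$. Each edge $e$ out of $v$ becomes copies $e^1,\dots,e^n$ with $s(e^i)=v^i$ and range $r(e)$, or range $v^j$ if $r(e)=v$ and $e\in\mathcal E_j$. An edge into $v$ from $w\neq v$ lying in $\mathcal E_i$ gets range $v^i$. *)

(* Defs.v *)
From mathcomp Require Import all_boot.
Set Implicit Arguments. Unset Strict Implicit. Unset Printing Implicit Defensive.

(* A graph with finitely many vertices: vertex set a finType, edge set an
   arbitrary type (possibly infinite: infinite emitters allowed). *)
Record graph := Graph {
  gV : finType;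
  gE : Type;
  gs : gE -> gV;
  gr : gE -> gV }.

Definition finite_set (T : Type) (P : T -> Prop) : Prop :=
  exists n (f : 'I_n -> T), forall x, P x -> exists i, f i = x.

Section Vertices.
Variable G : graph.
Definition is_sink (v : gV G) := forall e : gE G, gs e <> v.
Definition is_source (v : gV G) := forall e : gE G, gr e <> v.
Definition inf_emitter (v : gV G) := ~ finite_set (fun e : gE G => gs e = v).
Definition singular (v : gV G) := is_sink v \/ inf_emitter v.
Definition regular (v : gV G) := ~ singular v.
End Vertices.

Definition bij_onto (A B : Type) (f : A -> B) (P : B -> Prop) : Prop :=
  injective f /\ forall y, P y <-> exists x, f x = y.

(* (S) E is isomorphic to G with a regular source u and its edges deleted. *)
Definition moveS (G E : graph) : Prop :=
  exists u : gV G, regular u /\ is_source u /\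
  exists (p0 : gV E -> gV G) (p1 : gE E -> gE G),
    bij_onto p0 (fun x => x <> u) /\
    bij_onto p1 (fun e => gs e <> u) /\
    forall d, p0 (gs d) = gs (p1 d) /\ p0 (gr d) = gr (p1 d).

(* (R) reduction.  Edges of the new graph: (inl e) for old edges not touching
   u, (inr e) for the new edge [e f] with e in r^{-1}(u). *)
Definition moveR (G E : graph) : Prop :=
  exists (u : gV G) (f : gE G) (w : gV G),
    regular u /\ gs f = u /\ (forall e, gs e = u -> e = f) /\ gr f <> u /\
    (forall e, gr e = u -> gs e = w) /\
  exists (p0 : gV E -> gV G) (p1 : gE E -> gE G + gE G),
    bij_onto p0 (fun x => x <> u) /\
    bij_onto p1 (fun y => match y with
                          | inl e => gs e <> u /\ gr e <> u
                          | inr e => gr e = u end) /\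
    forall d, match p1 d with
              | inl e => p0 (gs d) = gs e /\ p0 (gr d) = gr e
              | inr e => p0 (gs d) = w /\ p0 (gr d) = gr f
              end.

(* (O) out-splitting at a non-sink v along a partition of s^{-1}(v) into
   n nonempty parts E_i = {e | s e = v /\ c e = i}, at most one infinite.
   New vertices: inl x (x <> v), inr i (= v^i).
   New edges: (e, None) for e with r e <> v; (e, Some i) = e^i for r e = v. *)
Definition moveO (G E : graph) : Prop :=
  exists (v : gV G) (n : nat) (c : gE G -> 'I_n),
    ~ is_sink v /\
    (forall i, exists e, gs e = v /\ c e = i) /\
    (forall i j, i <> j ->
       ~ (~ finite_set (fun e => gs e = v /\ c e = i) /\
          ~ finite_set (fun e => gs e = v /\ c e = j))) /\
  exists (p0 : gV E -> gV G + 'I_n) (p1 : gE E -> gE G * option 'I_n),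
    bij_onto p0 (fun y => match y with inl x => x <> v | inr _ => True end) /\
    bij_onto p1 (fun y => match y.2 with
                          | None => gr y.1 <> v
                          | Some _ => gr y.1 = v end) /\
    forall d,
      p0 (gs d) = (if gs (p1 d).1 == v then inr (c (p1 d).1)
                   else inl (gs (p1 d).1)) /\
      p0 (gr d) = (match (p1 d).2 with
                   | None => inl (gr (p1 d).1)
                   | Some i => inr i end).

(* (I) in-splitting at a regular non-source v along a partition of r^{-1}(v)
   into n nonempty parts E_i = {e | r e = v /\ c e = i}.
   New edges: (e, None) for e with s e <> v; (e, Some i) = e^i for s e = v. *)
Definition moveI (G E : graph) : Prop :=
  exists (v : gV G) (n : nat) (c : gE G -> 'I_n),
    regular v /\ ~ is_source v /\
    (forall i, exists e, gr e = v /\ c e = i) /\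
  exists (p0 : gV E -> gV G + 'I_n) (p1 : gE E -> gE G * option 'I_n),
    bij_onto p0 (fun y => match y with inl x => x <> v | inr _ => True end) /\
    bij_onto p1 (fun y => match y.2 with
                          | None => gs y.1 <> v
                          | Some _ => gs y.1 = v end) /\
    forall d,
      p0 (gr d) = (if gr (p1 d).1 == v then inr (c (p1 d).1)
                   else inl (gr (p1 d).1)) /\
      p0 (gs d) = (match (p1 d).2 with
                   | None => inl (gs (p1 d).1)
                   | Some i => inr i end).

Definition move (G E : graph) : Prop :=
  moveS G E \/ moveR G E \/ moveO G E \/ moveI G E.

Inductive move_equiv : graph -> graph -> Prop :=
  | me_move G E : move G E -> move_equiv G E
  | me_refl G : move_equiv G G
  | me_sym G E : move_equiv G E -> move_equiv E G
  | me_trans G H E : move_equiv G H -> move_equiv H E -> move_equiv G E.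

Notation "G ~M E" := (move_equiv G E) (at level 70).

Section Collapse.
Variables (G : graph) (v : gV G) (f0 : gE G).
Hypothesis Hnl : gr f0 <> v.
Hypothesis Hone : forall e, gs e = v -> e = f0.

Lemma neq_of (T : eqType) (x y : T) : x <> y -> x != y.
Proof. by move/eqP. Qed.

Lemma collapse_src_ok (e : gE G) : gr e = v -> gs e != v.
Proof.
move=> hr; apply/eqP => hs; apply: Hnl; by rewrite -(Hone hs).
Qed.

Definition cV : finType := {x : gV G | x != v}.
Definition cE : Type :=
  ({e : gE G | gs e <> v /\ gr e <> v} + {e : gE G | gr e = v})%type.

Definition c_src (d : cE) : cV :=
  match d with
  | inl p => exist _ (gs (proj1_sig p)) (neq_of (proj1 (proj2_sig p)))
  | inr p => exist _ (gs (proj1_sig p)) (collapse_src_ok (proj2_sig p))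
  end.

Definition c_rng (d : cE) : cV :=
  match d with
  | inl p => exist _ (gr (proj1_sig p)) (neq_of (proj2 (proj2_sig p)))
  | inr p => exist _ (gr f0) (neq_of Hnl)
  end.

Definition collapse : graph := @Graph cV cE c_src c_rng.
End Collapse.

(* Main.v *)
Require Import Defs.
From mathcomp Require Import all_boot.
From Stdlib Require Import Classical ProofIrrelevance.
Set Implicit Arguments. Unset Strict Implicit. Unset Printing Implicit Defensive.

Lemma regular_of (X : graph) (v : gV X) (f : gE X) :
  gs f = v -> (forall e, gs e = v -> e = f) -> regular v.
Proof.
move=> hf hone [hsink|hinf]; first exact: (hsink f hf).
apply: hinf; exists 1, (fun _ => f) => x /hone ->; by exists ord0.
Qed.

Section Step.
Variables (X : graph) (v : gV X) (f : gE X) (w : gV X).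
Hypothesis (Hfs : gs f = v) (Hone : forall e, gs e = v -> e = f) (Hnl : gr f <> v).
Variables (e0 e1 : gE X).
Hypothesis (He0r : gr e0 = v) (He0s : gs e0 = w) (He1r : gr e1 = v) (He1s : gs e1 <> w).

Lemma wv : w <> v.
Proof. move=> h; apply: Hnl; rewrite -(Hone (e:=e0)) //; by rewrite He0s. Qed.

Definition cc (e : gE X) : 'I_2 := if gs e == w then ord0 else ord_max.
Definition HVp (y : gV X + 'I_2) : bool := if y is inl x then x != v else true.
Definition HV : finType := {y | HVp y}.
Definition mkV y : HV := insubd (exist HVp (inr ord0) isT) y.
Definition HEp (y : gE X * option 'I_2) : bool :=
  if y.2 is Some _ then gs y.1 == v else gs y.1 != v.
Definition HE := {y | HEp y}.
Definition H_s (d : HE) : HV :=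
  mkV (if (val d).2 is Some i then inr i else inl (gs (val d).1)).
Definition H_r (d : HE) : HV :=
  mkV (if gr (val d).1 == v then inr (cc (val d).1) else inl (gr (val d).1)).
Definition Hg := @Graph HV HE H_s H_r.

Lemma mkVK y : HVp y -> val (mkV y) = y.
Proof. exact: insubdK. Qed.

Lemma stepI : moveI X Hg.
Proof.
exists v, 2, cc; split; first exact: regular_of Hfs Hone.
split; first by move=> h; exact: (h e0).
split.
  case=> [[|[|k]] hk] //.
    exists e0; split=> //; apply: val_inj; by rewrite /cc He0s eqxx.
  exists e1; split=> //; apply: val_inj; rewrite /cc.
  by case: eqP.
exists val, val; split.
  split; first exact: val_inj.
  move=> y; split.
    move=> hy; have h : HVp y by case: y hy => //= x /eqP.
    by exists (exist _ y h).
  by case=> [[[a|i] /= h]] <- //; apply/eqP.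
split.
  split; first exact: val_inj.
  move=> y; split.
    move=> hy; have h : HEp y by case: y hy => e [i|] hy; rewrite /HEp /=; [rewrite hy|apply/eqP].
    by exists (exist _ y h).
  by case=> [[[e [i|]] /= h]] <- /=; apply/eqP.
case=> [[e o] h]; rewrite /H_r /H_s /=; split.
  rewrite mkVK //. by case: eqP => //= /eqP.
rewrite mkVK //. by case: o h.
Qed.

Definition SLp e : bool := ~~ ((gr e == v) && (gs e == w)).
Definition SRp e : bool := (gr e == v) && (gs e == w).
Definition SE := ({e | SLp e} + {e | SRp e})%type.
Definition S_s (d : SE) := match d with inl p => gs (val p) | inr p => gs (val p) end.
Definition S_r (d : SE) := match d with inl p => gr (val p) | inr p => gr f end.
Definition Xs := @Graph (gV X) SE S_s S_r.

Lemma hfS (i : 'I_2) : HEp (f, Some i).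
Proof. by rewrite /HEp /= Hfs. Qed.
Definition fS0 : HE := exist _ (f, Some ord0) (hfS ord0).
Definition fS1 : HE := exist _ (f, Some ord_max) (hfS ord_max).
Definition hn e : HE := insubd fS1 (e, None).
Definition hl e : HE := if gs e == v then fS1 else hn e.
Definition q0 x : HV := if x == v then mkV (inr ord_max) else mkV (inl x).
Definition q1 (d : SE) : HE + HE :=
  match d with inl p => inl (hl (val p)) | inr p => inr (hn (val p)) end.

Lemma mkV_inj a b : HVp a -> HVp b -> mkV a = mkV b -> a = b.
Proof. by move=> ha hb /(congr1 val); rewrite !mkVK. Qed.

Lemma valhn e : gs e != v -> val (hn e) = (e, None).
Proof. by move=> h; rewrite /hn insubdK. Qed.

Lemma Hs_u d : H_s d = mkV (inr ord0) -> d = fS0.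
Proof.
case: d => [[e [i|]] h] /=; rewrite /H_s /= => /mkV_inj => hh.
  have := hh isT isT; case=> ->; apply: val_inj => /=.
  move: h; rewrite /HEp /= => /eqP h; by rewrite (Hone h).
by have := hh h isT.
Qed.

Lemma Hr_u d : H_r d = mkV (inr ord0) ->
  [/\ gr (val d).1 = v, gs (val d).1 = w & (val d).2 = None].
Proof.
case: d => [[e o] h] /=; rewrite /H_r /=.
case: eqP => hr /mkV_inj => hh; last by have := hh (introN eqP hr) isT.
have := hh isT isT; case; rewrite /cc; case: eqP => // hs _.
split=> //; case: o h => // i /= /eqP hv.
by apply: False_ind; apply: Hnl; rewrite -(Hone hv).
Qed.

Lemma wv' : w != v.
Proof. apply/eqP; exact: wv. Qed.

Lemma stepR : moveR Hg Xs.
Proof.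
have Hs0 : H_s fS0 = mkV (inr ord0) by [].
have Hr0 : H_r fS0 <> mkV (inr ord0).
  by move/Hr_u=> [/= h _ _].
exists (mkV (inr ord0)), fS0, (mkV (inl w)).
split; first exact: (@regular_of Hg _ fS0 Hs0 Hs_u).
split=> //; split; first exact: Hs_u.
split=> //; split.
  move=> d /Hr_u [hr hs ho]; case: d hr hs ho => [[e o] h] /= hr hs ho.
  by rewrite /H_s /= ho hs.
exists q0, q1; split.
  split.
    move=> x y; rewrite /q0; case: eqP => hx; case: eqP => hy.
    - by rewrite hx hy.
    - by move/mkV_inj => h; have := h isT (introN eqP hy).
    - by move/mkV_inj => h; have := h (introN eqP hx) isT.
    - by move/mkV_inj => h; case: (h (introN eqP hx) (introN eqP hy)).
  move=> y; split.
    case: y => [[a|i] h] hy.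
      exists a; rewrite /q0 (negbTE h); apply: val_inj; by rewrite mkVK.
    exists v; rewrite /q0 eqxx; apply: val_inj; rewrite mkVK //=.
    case: i h hy => [[|[|k]] hk] // h hy.
      by case: hy; apply: val_inj; rewrite /= mkVK //; congr inr; apply: val_inj.
    by congr inr; apply: val_inj.
  move=> [x <-]; rewrite /q0; case: eqP => hx /mkV_inj h.
    by have := h isT isT.
  by have := h (introN eqP hx) isT.
have hlK e : (val (hl e)).1 = e.
  rewrite /hl; case: eqP => h; first by rewrite /= (Hone h).
  by rewrite valhn //; apply/eqP.
split.
  split.
    case=> [[e h]|[e h]] [[e' h']|[e' h']] //= [] /(congr1 (fun d => (val d).1)).
      by rewrite !hlK => ee; subst e'; rewrite (bool_irrelevance h h').
    have hv : forall e, SRp e -> gs e != v.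
      by move=> x /andP [_ /eqP ->]; exact: wv'.
    rewrite !valhn ?hv //= => ee; subst e'; by rewrite (bool_irrelevance h h').
  move=> y; split.
    case: y => [[[e [i|]] h]|[[e o] h]] /=.
    - move=> [hs hr]; have ef : e = f by apply: Hone; exact/eqP.
      subst e.
      have hL : SLp f by rewrite /SLp; case: eqP.
      exists (inl (exist _ f hL)); rewrite /= /hl Hfs eqxx; congr inl.
      apply: val_inj => /=; congr (_, Some _).
      case: i h hs hr => [[|[|k]] hk] // h hs hr.
        by case: hs; rewrite /H_s /=; congr mkV; congr inr; apply: val_inj.
      exact: val_inj.
    - move=> [hs hr].
      have hL : SLp e.
        rewrite /SLp; apply/negP => /andP [/eqP a /eqP b]; apply: hr.
        by rewrite /H_r /= a eqxx /cc b eqxx.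
      exists (inl (exist _ e hL)); rewrite /= /hl (negbTE h); congr inl.
      by apply: val_inj; rewrite valhn.
    - move=> hr; have [/= a b c] := Hr_u hr.
      have hR : SRp e by rewrite /SRp a b !eqxx.
      exists (inr (exist _ e hR)) => /=; congr inr; apply: val_inj.
      rewrite valhn; first by case: o h c hr.
      by rewrite b wv'.
  move=> [[[e h]|[e h]] <-] /=.
    rewrite /hl; case: eqP => hs.
      split; first by move/Hs_u.
      by move/Hr_u => [] /=.
    rewrite /H_s /H_r !valhn /=; last by apply/eqP.
    split; first by move/mkV_inj => hh; have := hh (introN eqP hs) isT.
    case: eqP => a /mkV_inj hh; last by have := hh (introN eqP a) isT.
    have := hh isT isT; case; rewrite /cc; case: eqP => // b.
    by move: h; rewrite /SLp a b !eqxx.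
  move: h => /andP [/eqP a /eqP b].
  rewrite /H_r valhn /=; last by rewrite b wv'.
  by rewrite a eqxx /cc b eqxx.
case=> [[e h]|[e h]] /=.
  rewrite /hl; case: eqP => hs.
    rewrite /q0 hs eqxx /H_r /= (introF eqP Hnl).
    have -> : e = f by exact: Hone.
    by rewrite (introF eqP Hnl).
  rewrite /H_s /H_r valhn /=; last by apply/eqP.
  rewrite /q0 (introF eqP hs); split=> //.
  case: eqP => // hr; congr mkV; congr inr.
  move: h; rewrite /SLp hr eqxx /= /cc; by case: eqP.
move: h => /andP [/eqP a /eqP b].
by rewrite /q0 b (introF eqP wv) /H_r /= !(introF eqP Hnl).
Qed.
End Step.

Definition Rgen (C X : graph) (n : nat) : Prop :=
  exists (v : gV X) (f : gE X) (S : {set gV X}),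
    [/\ gs f = v, (forall e, gs e = v -> e = f), gr f <> v & ~ is_source v] /\
    #|S| <= n /\ (forall e, gr e = v -> gs e \in S) /\
    exists (p0 : gV C -> gV X) (p1 : gE C -> gE X + gE X),
      bij_onto p0 (fun x => x <> v) /\
      bij_onto p1 (fun y => match y with
                            | inl e => gs e <> v /\ gr e <> v
                            | inr e => gr e = v end) /\
      forall d, match p1 d with
        | inl e => p0 (gs d) = gs e /\ p0 (gr d) = gr e
        | inr e => p0 (gs d) = gs e /\ p0 (gr d) = gr f end.

Definition ut (T : Type) (y : T + T) : T := match y with inl e => e | inr e => e end.

Section Trans.
Variables (C X : graph) (v : gV X) (f : gE X) (w : gV X).
Hypothesis (Hfs : gs f = v) (Hone : forall e, gs e = v -> e = f) (Hnl : gr f <> v).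
Variables (e0 e1 : gE X).
Hypothesis (He0r : gr e0 = v) (He0s : gs e0 = w) (He1r : gr e1 = v) (He1s : gs e1 <> w).

Lemma hL0 : SLp v w f.
Proof. by rewrite /SLp; case: eqP. Qed.
Lemma hR0 : SRp v w e0.
Proof. by rewrite /SRp He0r He0s !eqxx. Qed.
Definition toX (e : gE X) : SE v w :=
  if SRp v w e then inr (insubd (exist _ e0 hR0) e) else inl (insubd (exist _ f hL0) e).
Definition utS (d : SE v w) : gE X := match d with inl p => val p | inr p => val p end.
Lemma utS_toX e : utS (toX e) = e.
Proof. rewrite /toX; case: ifP => h /=; rewrite insubdK //; exact: (negbT h). Qed.
Definition gg (y : gE X + gE X) : SE v w + SE v w :=
  match y with inl e => inl (toX e)
  | inr e => if gs e == w then inl (toX e) else inr (toX e) end.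
Lemma ut_gg y : utS (ut (gg y)) = ut y.
Proof. case: y => e //=; first exact: utS_toX. case: ifP => _; exact: utS_toX. Qed.

Lemma wv2 : w <> v.
Proof. move=> h; apply: Hnl; rewrite -(Hone (e:=e0)) //; by rewrite He0s. Qed.

Lemma Rgen_trans (S : {set gV X}) n :
  ~ is_source v -> #|S| <= n.+1 -> (forall e, gr e = v -> gs e \in S) ->
  (exists (p0 : gV C -> gV X) (p1 : gE C -> gE X + gE X),
      bij_onto p0 (fun x => x <> v) /\
      bij_onto p1 (fun y => match y with
                            | inl e => gs e <> v /\ gr e <> v
                            | inr e => gr e = v end) /\
      forall d, match p1 d with
        | inl e => p0 (gs d) = gs e /\ p0 (gr d) = gr e
        | inr e => p0 (gs d) = gs e /\ p0 (gr d) = gr f end) ->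
  Rgen C (Xs v f w) n.
Proof.
move=> hns hS hin [p0 [p1 [hp0 [[hi1 hp1] hc]]]].
exists v, (inl (exist _ f hL0)), (S :\ w); split; [split|split].
- exact: Hfs.
- case=> [[e h]|[e h]] /= hs.
    have ef := Hone hs; subst e; congr inl; apply: val_inj => //.
  have /andP [_ /eqP hw] := h; by case: wv2; rewrite -hw.
- exact: Hnl.
- have hL : SLp v w e1 by rewrite /SLp He1r eqxx; case: eqP.
  by move=> h; apply: (h (inl (exist _ e1 hL))).
- have hw : w \in S by rewrite -He0s; exact: hin.
  have := cardsD1 w S; rewrite hw => hc1.
  by move: hS; rewrite hc1 add1n ltnS.
split.
  case=> [[e h]|[e h]] /= hr; last by case: Hnl.
  rewrite in_setD1 hin // andbT; apply/eqP => hw.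
  by move: h; rewrite /SLp hr hw !eqxx.
have predK y : (match y with
                            | inl e => gs e <> v /\ gr e <> v
                            | inr e => gr e = v end) ->
   y = if gr (ut y) == v then inr (ut y) else inl (ut y).
  by case: y => e /=; [case=> _ /eqP /negbTE -> | move=> ->; rewrite eqxx].
have pr x := (proj2 (hp1 (p1 x)) (ex_intro _ x erefl)).
exists p0, (fun x => gg (p1 x)); split=> //; split.
  split.
    move=> x y h; apply: hi1.
    rewrite (predK _ (pr x)) (predK _ (pr y)).
    by rewrite -!ut_gg h.
  move=> z; split.
    case: z => [[[e h]|[e h]]|[[e h]|[e h]]] /=.
    + case=> a b.
      have [x hx] := proj1 (hp1 (inl e)) (conj a b).
      exists x; rewrite hx /= /toX /SRp (negbTE h).
      do 2 f_equal; apply: val_inj; by rewrite /= insubdK.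
    + move=> _; have /andP [/eqP a /eqP b] := h.
      have [x hx] := proj1 (hp1 (inr e)) a.
      exists x; rewrite hx /= b eqxx /toX h; do 2 f_equal; apply: val_inj; by rewrite /= insubdK.
    + move=> a.
      have hb : gs e != w by move: (h); rewrite /SLp a eqxx.
      have [x hx] := proj1 (hp1 (inr e)) a.
      exists x; rewrite hx /= (negbTE hb) /toX /SRp (negbTE h).
      do 2 f_equal; apply: val_inj; by rewrite /= insubdK.
    + by move=> h'; case: Hnl.
  move=> [x <-]; have := pr x; case: (p1 x) => e /=.
    case=> a b; rewrite /toX; case: ifP => [/andP [/eqP //]|hn] /=.
    rewrite insubdK //; exact: negbT.
  move=> a; case: ifP => hw; rewrite /toX; case: ifP => hR /=.
  - rewrite insubdK; last exact: hR.
    split; [move/eqP: hw => ->; exact: wv2 | exact: Hnl].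
  - by move: hR; rewrite /SRp a hw eqxx.
  - by move: hR; rewrite /SRp a hw eqxx.
  - rewrite insubdK; [exact: a | exact: negbT hR].
move=> d; have := hc d; have := pr d; case: (p1 d) => e /=.
  case=> a b; rewrite /toX; case: ifP => [/andP [/eqP //]|hn] /=.
  rewrite insubdK; [exact: id | exact: negbT hn].
move=> a; case: ifP => hw; rewrite /toX; case: ifP => hR /=.
- rewrite insubdK; [exact: id | exact: hR].
- by move: hR; rewrite /SRp a hw eqxx.
- by move: hR; rewrite /SRp a hw eqxx.
- rewrite insubdK; [exact: id | exact: negbT hR].
Qed.
End Trans.

Lemma main_ind (C : graph) n : forall X, Rgen C X n -> X ~M C.
Proof.
elim: n => [|n IH] X [v [f [S [[hf hone hnl hns] [hS [hin [p0 [p1 [hp0 [hp1 hc]]]]]]]]]].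
all: have [e0 he0] : exists e0, gr e0 = v by
  apply: Classical_Prop.NNPP => hn; apply: hns => e he; apply: hn; exists e.
all: case: (Classical_Prop.classic (exists e1, gr e1 = v /\ gs e1 <> gs e0)).
- move=> _; have := hin e0 he0.
  by move: hS; rewrite leqn0 => /eqP/cards0_eq ->; rewrite in_set0.
- move=> hno; apply: me_move; right; left.
  exists v, f, (gs e0); split; first exact: regular_of hf hone.
  split=> //; split=> //; split=> //; split.
    move=> e he; apply: Classical_Prop.NNPP => hne; apply: hno; by exists e.
  exists p0, p1; split=> //; split=> //.
  move=> d; have := hc d.
  have := proj2 (proj2 hp1 (p1 d)) (ex_intro _ d erefl).
  case: (p1 d) => // e he [h1 h2]; split=> //; rewrite h1.
  apply: Classical_Prop.NNPP => hne; apply: hno; by exists e.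
- move=> [e1 [he1r he1s]].
  apply: me_trans; first by apply: me_move; do 3 right; exact: (stepI hf hone he0 erefl he1r he1s).
  apply: me_trans; first by apply: me_move; right; left; exact: (stepR hf hone hnl he0 erefl).
  apply: IH; apply: (Rgen_trans hf hone hnl he0 erefl he1r he1s hns hS hin).
  by exists p0, p1.
- move=> hno; apply: me_move; right; left.
  exists v, f, (gs e0); split; first exact: regular_of hf hone.
  split=> //; split=> //; split=> //; split.
    move=> e he; apply: Classical_Prop.NNPP => hne; apply: hno; by exists e.
  exists p0, p1; split=> //; split=> //.
  move=> d; have := hc d.
  have := proj2 (proj2 hp1 (p1 d)) (ex_intro _ d erefl).
  case: (p1 d) => // e he [h1 h2]; split=> //; rewrite h1.
  apply: Classical_Prop.NNPP => hne; apply: hno; by exists e.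
Qed.

Theorem lemma5p1 (G : graph) (v : gV G) (f0 : gE G)
  (Hreg : regular v) (Hnsrc : ~ is_source v)
  (Hf0 : gs f0 = v) (Hone : forall e : gE G, gs e = v -> e = f0)
  (Hnl : gr f0 <> v) :
  G ~M collapse Hnl Hone.
Proof.
apply: (@main_ind _ #|[set: gV G]|).
exists v, f0, [set: gV G]; split; first by split.
split=> //; split; first by move=> e _; rewrite in_setT.
exists (fun x => val x).
exists (fun d : gE (collapse Hnl Hone) => match d with inl p => inl (proj1_sig p) | inr p => inr (proj1_sig p) end).
split.
  split; first exact: val_inj.
  move=> y; split.
    by move=> hy; exists (exist _ y (introN eqP hy)).
  by move=> [[x hx] <-] /=; apply/eqP.
split.
  split.
    case=> [[e h]|[e h]] [[e' h']|[e' h']] //= [] ee; subst e';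
      by rewrite (ProofIrrelevance.proof_irrelevance _ h h').
  case=> e; split.
  - by move=> h; exists (inl (exist _ e h)).
  - by move=> [[[e' h]|[e' h]]] //= [<-].
  - by move=> h; exists (inr (exist _ e h)).
  - by move=> [[[e' h]|[e' h]]] //= [<-].
by case=> [[e h]|[e h]].
Qed.
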